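(* Let $p$ be an odd prime and take $k=0$. For every $s\ge2$, the $p^0$-Fibonacci number of the vertex $V_{s,0}=\lambda\big(2sp-(2s+1),\,sp-(s+1)\big)$ on floor $2s$ is $$\mathcal M_{V_{s,0}}=\frac{p-1}{2}\Big(2(s-1)p^{s-1}-(2s-3)p^{s-2}\Big).$$
   Context: Fix an odd prime $p$ and an integer $k\ge 0$. For integers $0\le i<n$ write $\lambda(n,i)=(n-i,1^i)$ for the hook partition of $n$ with $n-i$ boxes in its first row and $i$ further boxes in its first column. If $\mu=\lambda(n',i')$ is obtained from $\lambda(n,i)$ by appending $m=(n'-i')-(n-i)\ge 0$ boxes to the first row and $n''=i'-i\ge 0$ boxes to the first column, we say $\mu$ is obtained by adding the block $B_{m,n''}$ ($m$ horizontal nodes, $n''$ vertical nodes). Put $x_s=p^k(sp-(s+1))$. The relevant part (''column $k$'') of the $p$-Bratteli diagram is the graded directed graph with vertices: on floor $2k+1$, $S_i=\lambda(p^k(p-1),i)$ for $0\le i<p^k(p-1)$; on floor $2(k+s)$ ($s\ge1$), $V_{s,l}=\lambda\big(p^k(2sp-(2s+1)),\,x_s+l\big)$ for $0\le l<p^k$; on floor $2(k+s)-1$ ($s\ge2$), $W_{s,l'}=\lambda\big(p^k((2s-1)p-2s),\,x_{s-1}+l'\big)$ for $0\le l'<p^{k+1}$; and edges, each labelled by the block added: (E1) $S_i\to V_{1,l}$ exactly when $i=p^kt+l$ with $0\le t\le p-2$, block $B_{p^kt,\,p^k(p-2-t)}$; (E2) for $s\ge2$, $0\le l<p^k$, $0\le\beta\le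 p-1$: $V_{s-1,l}\to W_{s,pl+\beta}$, block $B_{p^k(p-1)-((p-1)l+\beta),\,(p-1)l+\beta}$; (E3) for $s\ge 2$, $0\le l'<p^{k+1}$ and $t=\lfloor l'/p^k\rfloor$: $W_{s,l'}\to V_{s,l'-p^kt}$, block $B_{p^kt,\,p^k(p-1-t)}$. A path ending at a vertex $v$ is a sequence of edges starting at some $S_i$ and going up one floor at a time to $v$ ($S_i\to V_{1,\cdot}\to W_{2,\cdot}\to V_{2,\cdot}\to W_{3,\cdot}\to\cdots\to v$); $\mathcal P(v)$ is the set of all paths ending at $v$. The blocks of a path are numbered $B^2,B^3,\dots,B^N$: $B^2$ is the block of the edge leaving $S_i$, and for $j\ge2$, $B^{2j-1}$ is the block of the edge into $W_{j,\cdot}$ and $B^{2j}$ the block of the edge into $V_{j,\cdot}$. Write $B^j=B_{m_j,n_j}$. Descents: $1\in\mathrm{Des}(P)$ iff $m_2=p^kt$ with $0\le t<\frac{p-1}{2}$; $2\notin\mathrm{Des}(P)$; for $3\le j<N$, $j\in\mathrm{Des}(P)$ iff $m_j>m_{j+1}$ and $n_j<n_{j+1}$. $\mathrm{des}(P)=|\mathrm{Des}(P)|$. The $p^k$-Fibonacci number of a vertex $v$ is $\mathcal M_v=\sum_{P\in\mathcal P(v)}\mathrm{des}(P)$. *)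

(* Defs.v *)
From mathcomp Require Import all_boot all_order all_algebra.
Set Implicit Arguments. Unset Strict Implicit. Unset Printing Implicit Defensive.

(* A path ending at V_{s,l} : S_i -> V_{1,l_1} -> W_{2,l'_2} -> V_{2,l_2} -> ...
   -> W_{s,l'_s} -> V_{s,l_s}.  It is encoded by the vertex indices:
   i < p^k(p-1), L = (l_1,...,l_s) with l_j < p^k, and
   L' = (l'_2,...,l'_s) with l'_j < p^(k+1).  Between two vertices there is at
   most one edge, so the vertex sequence determines the path. *)

Section Column.
Variables (p k : nat).
Local Notation pk := (p ^ k).

(* l_j for 1 <= j <= s *)
Definition lV (s : nat) (L : s.-tuple 'I_(p ^ k)) (j : nat) : nat :=
  nth 0 [seq val x | x <- L] j.-1.
(* l'_j for 2 <= j <= s *)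
Definition lW (s : nat) (L' : (s.-1).-tuple 'I_(p ^ k.+1)) (j : nat) : nat :=
  nth 0 [seq val x | x <- L'] (j - 2).

Definition edgeE1 (i l : nat) : bool := [exists t : 'I_(p.-1), i == pk * t + l].
Definition edgeE2 (l l' : nat) : bool := [exists b : 'I_p, l' == p * l + b].
Definition edgeE3 (l' l : nat) : bool := l == l' - pk * (l' %/ pk).

Definition is_path (s : nat) (i : nat) (L : s.-tuple 'I_(p ^ k))
    (L' : (s.-1).-tuple 'I_(p ^ k.+1)) : bool :=
  edgeE1 i (lV L 1) &&
  [forall j : 'I_s.+1, (2 <= j) ==>
     (edgeE2 (lV L j.-1) (lW L' j) && edgeE3 (lW L' j) (lV L j))].

(* Blocks B^j = B_{m_j, n_j}, 2 <= j <= 2s, as (m_j, n_j). *)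
Definition block (s : nat) (i : nat) (L : s.-tuple 'I_(p ^ k))
    (L' : (s.-1).-tuple 'I_(p ^ k.+1)) (j : nat) : nat * nat :=
  if j == 2 then
    let t := (i - lV L 1) %/ pk in (pk * t, pk * (p - 2 - t))
  else if odd j then
    (* j = 2r-1, r >= 2 : E2 block, beta = l'_r - p l_{r-1} *)
    let r := j.+1./2 in
    let c := (p - 1) * lV L r.-1 + (lW L' r - p * lV L r.-1) in
    (pk * (p - 1) - c, c)
  else
    let r := j./2 in
    let t := lW L' r %/ pk in (pk * t, pk * (p - 1 - t)).

Definition des (s : nat) (i : nat) (L : s.-tuple 'I_(p ^ k))
    (L' : (s.-1).-tuple 'I_(p ^ k.+1)) : nat :=
  let B := block i L L' in
  let N := s.*2 in
  ([exists t : 'I_((p - 1)./2), (B 2).1 == pk * t] : nat) +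
  (* 2 is never a descent *)
  \sum_(3 <= j < N) (((B j).1 > (B j.+1).1) && ((B j).2 < (B j.+1).2) : nat).

Definition fibM (s l : nat) : nat :=
  \sum_(i < pk * (p - 1))
   \sum_(L : s.-tuple 'I_(p ^ k))
    \sum_(L' : (s.-1).-tuple 'I_(p ^ k.+1) | is_path i L L' && (lV L s == l))
      des i L L'.

End Column.

(* Main.v *)
Require Import Defs.
From mathcomp Require Import all_boot all_order all_algebra.
From mathcomp Require Import zify.
Set Implicit Arguments. Unset Strict Implicit.

Lemma sum_tuple_cons (T : finType) n (G : n.+1.-tuple T -> nat) :
  \sum_(t : n.+1.-tuple T) G t = \sum_(x : T) \sum_(t : n.-tuple T) G [tuple of x :: t].
Proof.
rewrite pair_big /=.
rewrite (reindex (fun u : T * n.-tuple T => [tuple of u.1 :: u.2])) //=.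
exists (fun t : n.+1.-tuple T => (thead t, [tuple of behead t])).
  move=> [x t] _ /=; rewrite theadE; congr pair; exact: val_inj.
move=> t _ /=; by rewrite [in RHS](tuple_eta t).
Qed.

Lemma sum_tuple_nth q n r (F : nat -> nat) : r < n ->
  \sum_(t : n.-tuple 'I_q) F (nth 0 (map val t) r) = q ^ n.-1 * \sum_(x < q) F x.
Proof.
elim: n r => [|n IH] [|r] //= Hr; rewrite sum_tuple_cons /=.
  under eq_bigr do rewrite sum_nat_const card_tuple card_ord.
  by rewrite -big_distrr.
under eq_bigr do rewrite IH //.
rewrite sum_nat_const card_ord mulnA -expnS.
by case: n Hr {IH}.
Qed.

Lemma sum_tuple_nth2 q n r (F : nat -> nat -> nat) : r.+1 < n ->
  \sum_(t : n.-tuple 'I_q) F (nth 0 (map val t) r) (nth 0 (map val t) r.+1)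
   = q ^ n.-2 * \sum_(x < q) \sum_(y < q) F x y.
Proof.
elim: n r => [|n IH] [|r] //= Hr; rewrite sum_tuple_cons /=.
  under eq_bigr => x _ do rewrite (@sum_tuple_nth q _ _ (F x)) //.
  by rewrite -big_distrr.
under eq_bigr do rewrite IH //.
rewrite sum_nat_const card_ord mulnA -expnS.
by case: n Hr {IH} => [|[|n]].
Qed.

Lemma sum_lt n h : \sum_(x < n) ((x < h) : nat) = minn h n.
Proof.
elim: n => [|n IH]; first by rewrite big_ord0 minn0.
rewrite big_ord_recr /= IH; case: (ltnP n h) => H /=; lia.
Qed.

Lemma sum_ge n c : \sum_(x < n) ((c <= x) : nat) = n - c.
Proof.
elim: n => [|n IH]; first by rewrite big_ord0.
rewrite big_ord_recr /= IH; case: (leqP c n) => H /=; lia.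
Qed.

Lemma sum_id2 n : (\sum_(x < n) (x : nat)) * 2 = n * n.-1.
Proof.
elim: n => [|n IH]; first by rewrite big_ord0.
rewrite big_ord_recr /= mulnDl IH; case: n {IH} => //= n; lia.
Qed.

Lemma sum_oddeven m A B :
  \sum_(3 <= j < (m.+2).*2) (if odd j then A else B) = m.+1 * A + m * B.
Proof.
elim: m => [|m IH]. rewrite (_ : 0.+2.*2 = 4) // big_nat1 /=; lia.
rewrite (_ : m.+3.*2 = (m.+2.*2).+2); last by lia.
rewrite big_nat_recr /=; last by lia.
rewrite big_nat_recr /=; last by lia.
rewrite IH /= odd_double /=; lia.
Qed.

Lemma nth_I1 (l : seq 'I_1) j : nth 0 (map val l) j = 0.
Proof. elim: l j => [|x l IH] [|j] //=; try by rewrite nth_nil. by case: x => [[|]]. Qed.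

Lemma nth_lt q (l : seq 'I_q) j : 0 < q -> nth 0 (map val l) j < q.
Proof. move=> Hq; elim: l j => [|x l IH] [|j] //=; by rewrite nth_nil. Qed.

Lemma lV0 p s (L : s.-tuple 'I_(p ^ 0)) j : lV L j = 0.
Proof. exact: nth_I1. Qed.

Lemma is_path0 p s i (L : s.-tuple 'I_(p ^ 0)) (L' : (s.-1).-tuple 'I_(p ^ 1)) :
  0 < p -> i < p - 1 -> is_path i L L'.
Proof.
move=> Hp Hi; rewrite /is_path /edgeE1 /edgeE2 /edgeE3 !lV0 expn0.
apply/andP; split.
  apply/existsP; have Hi' : i < p.-1 by rewrite -subn1. exists (Ordinal Hi'); by rewrite mul1n addn0.
apply/forallP => j; apply/implyP => _; rewrite !lV0; apply/andP; split.
  apply/existsP; exists (Ordinal (nth_lt (L' : seq 'I_p) (j - 2) Hp)).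
  by rewrite muln0.
by rewrite divn1 mul1n subnn.
Qed.

Definition Fo p b : nat := ((b < p - 1 - b) && (b < p - 1 - b)).
Definition Fe p x y : nat := ((p - 1 - y < x) && (p - 1 - x < y)).

Lemma desE p m i (L : m.+2.-tuple 'I_(p ^ 0)) (L' : m.+1.-tuple 'I_(p ^ 1)) :
  des i L L' = (i < (p-1)./2) +
   \sum_(3 <= j < (m.+2).*2) (if odd j then Fo p (nth 0 (map val L') (uphalf j - 2))
      else Fe p (nth 0 (map val L') (j./2 - 2)) (nth 0 (map val L') (j./2 - 1))).
Proof.
rewrite /des /block /= !lV0 expn0 !(subn0, divn1, mul1n).
congr (nat_of_bool _ + _).
  apply/idP/idP.
    by case/existsP => t; rewrite mul1n => /eqP ->.
  move=> H; apply/existsP; exists (Ordinal H); by rewrite mul1n.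
apply: eq_big_nat => j /andP [Hj1 Hj2].
have Ej : (j == 2) = false by apply/negbTE; lia.
have Ej1 : (j.+1 == 2) = false by apply/negbTE; lia.
rewrite Ej Ej1 !lV0 /lW.
case: (boolP (odd j)) => Ho /=; rewrite !(muln0, subn0, addn0, add0n, mul1n, divn1) /Fo /Fe //.
Qed.

Lemma sumFo q h : q = h.*2.+1 -> \sum_(x < q) Fo q x = h.
Proof.
move=> Hq; rewrite -[RHS](_ : minn h q = h); last by lia.
rewrite -sum_lt; apply: eq_bigr => x _; rewrite /Fo andbb.
by congr nat_of_bool; apply/idP/idP => ?; lia.
Qed.

Lemma sumFe q : (\sum_(x < q) \sum_(y < q) Fe q x y) * 2 = q * q.-1.
Proof.
rewrite -sum_id2; congr muln; apply: eq_bigr => x _.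
rewrite -[RHS](_ : q - (q - x) = x); last by have := ltn_ord x; lia.
rewrite -sum_ge; apply: eq_bigr => y _; rewrite /Fe.
have := ltn_ord x; have := ltn_ord y.
by move=> ? ?; congr nat_of_bool; apply/idP/idP => ?; lia.
Qed.

Lemma fib_nat p m h : p = h.*2.+1 ->
  fibM p 0 m.+2 0 = p ^ m.+1 * h +
    (p - 1) * (m.+1 * (p ^ m * h) + m * (p ^ m.-1 * (\sum_(x < p) \sum_(y < p) Fe p x y))).
Proof.
move=> Hp.
have Hh : (p - 1)./2 = h by rewrite Hp subn1 /= doubleK.
set E := fun L' : m.+1.-tuple 'I_(p ^ 1) =>
   \sum_(3 <= j < (m.+2).*2) (if odd j then Fo p (nth 0 (map val L') (uphalf j - 2))
      else Fe p (nth 0 (map val L') (j./2 - 2)) (nth 0 (map val L') (j./2 - 1))).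
have E1 : fibM p 0 m.+2 0 = \sum_(i < p ^ 0 * (p - 1))
    \sum_(L : m.+2.-tuple 'I_(p ^ 0)) \sum_(L' : m.+1.-tuple 'I_(p ^ 1)) ((i < h) + E L').
  apply: eq_bigr => i _; apply: eq_bigr => L _.
  rewrite (eq_bigl xpredT) => [|L'].
    apply: eq_bigr => L' _; by rewrite desE Hh.
  rewrite is_path0 ?lV0 //; first by rewrite Hp.
  have H := ltn_ord i. have H3 : (p ^ 0 * (p - 1) = p - 1) by rewrite expn0 mul1n. exact: (leq_trans H (eq_leq H3)).
have E2 : \sum_(L' : m.+1.-tuple 'I_(p ^ 1)) E L' =
    m.+1 * (p ^ m * h) + m * (p ^ m.-1 * (\sum_(x < p) \sum_(y < p) Fe p x y)).
  rewrite /E exchange_big /= -sum_oddeven.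
  apply: eq_big_nat => j /andP [Hj1 Hj2].
  case: (boolP (odd j)) => Ho.
    rewrite (@sum_tuple_nth (p ^ 1) m.+1 (uphalf j - 2) (Fo p)).
      by rewrite (@sumFo _ h).
    have Hj := odd_double_half j; rewrite ?uphalf_half; move: Hj Hj1 Hj2 Ho; case: (odd j) => //=; lia.
  have H2 : j./2 - 1 = (j./2 - 2).+1.
    have Hj := odd_double_half j; rewrite ?uphalf_half; move: Hj Hj1 Hj2 Ho; case: (odd j) => //=; lia.
  rewrite H2 (@sum_tuple_nth2 (p ^ 1) m.+1 (j./2 - 2) (Fe p)) //.
  rewrite -H2; have Hj := odd_double_half j; rewrite ?uphalf_half; move: Hj Hj1 Hj2 Ho; case: (odd j) => //=; lia.
rewrite E1.
have P0 : (p ^ 0) ^ m.+2 = 1 by rewrite expn0 exp1n.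
have P1 : (p ^ 1) ^ m.+1 = p ^ m.+1 by rewrite expn1.
have P2 : p ^ 0 * (p - 1) = p - 1 by rewrite expn0 mul1n.
under eq_bigr => i _ do rewrite sum_nat_const card_tuple card_ord P0 mul1n
   big_split /= sum_nat_const card_tuple card_ord P1 E2.
rewrite big_split /= -big_distrr /= sum_lt sum_nat_const card_ord P2.
rewrite (_ : minn h (p - 1) = h); last by lia.
by rewrite mulnC.
Qed.

From mathcomp Require Import ring lra.
Import GRing.Theory Num.Theory.
Local Open Scope ring_scope.

Unset Implicit Arguments.
Theorem mainTheorem5 (p s : nat) :
  prime p -> odd p -> (2 <= s)%N ->
  ((fibM p 0 s 0)%:R : rat) =
    ((p%:R - 1) / 2) *
    (2 * (s%:R - 1) * p%:R ^+ (s - 1) - (2 * s%:R - 3) * p%:R ^+ (s - 2)).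
Proof.
move=> _ Hodd; case: s => [|[|m]] // _.
have Hp : p = (p./2).*2.+1 by rewrite -[LHS](odd_double_half p) Hodd add1n.
set h := p./2 in Hp.
rewrite (fib_nat m Hp).
have HN := sumFe p.
set N := \sum_(x < p) \sum_(y < p) Fe p x y in HN *.
rewrite (_ : (m.+2 - 1)%N = m.+1); last by lia.
rewrite (_ : (m.+2 - 2)%N = m); last by lia.
have HNr : (N%:R : rat) = p%:R * (p%:R - 1) / 2.
  have : ((N * 2)%N%:R : rat) = (p * p.-1)%N%:R by rewrite HN.
  rewrite !natrM -subn1 natrB; last by rewrite Hp.
  move=> H; rewrite -H; field; by [].
have Hhr : (h%:R : rat) = (p%:R - 1) / 2.
  rewrite Hp -muln2 -natr1 natrM; field; by [].
rewrite natrD natrM natrX Hhr natrM natrB; last by rewrite Hp.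
case: m => [|m].
  rewrite !mul0n !addn0 ?natrM ?natrX ?Hhr ?expr0 ?expr1; field; by [].
have nS : forall k, (k.+1)%:R = k%:R + 1 :> rat by move=> k; rewrite natr1.
rewrite /= !natrD !natrM !natrX HNr Hhr !nS !exprS; field; by [].
Qed.
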